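(* Let $n,r\geq 1$ and let $F$ be a real-valued mapping defined on $\bigcup_{\eta\subset[n]}\Pi(\eta\times[r])$ which has the connectedness factorization property: for every nonempty $\eta\subset[n]$ and every $\rho\in\Pi(\eta\times[r])$, $$F(\rho)=\prod_{b\subset\eta:\ b\times[r]\in\rho\vee\pi_\eta}F(\rho_b),\qquad \rho_b:=\{c\in\rho: c\subset b\times[r]\}.$$ Then for every nonempty $\eta\subset[n]$ the virtual cumulant of $F$ satisfies $$C_F(\eta)=\sum_{\sigma\in\Pi(\eta\times[r]):\ \sigma\vee\pi_\eta=\widehat{1}}F(\sigma),$$ the sum being over connected partitions of $\eta\times[r]$.
   Context: $[n]=\{1,\dots,n\}$; $\Pi(S)$ is the set of partitions of a finite set $S$; $\rho\vee\sigma$ is the finest partition coarser than $\rho$ and $\sigma$, $\widehat{1}$ is the one-block partition. For $\eta\subset[n]$, $\pi_\eta=\{\pi_k:k\in\eta\}$ with $\pi_k=\{(k,1),\dots,(k,r)\}$; note that every block of $\rho\vee\pi_\eta$ has the form $b\times[r]$ with $b\subset\eta$. The Möbius transform is $\widehat{F}(\eta):=\sum_{\rho\in\Pi(\eta\times[r])}F(\rho)$, $\widehat F(\emptyset)=0$. The virtual cumulant $C_F$ is defined by $C_F(\eta)=\widehat F(\eta)$ when $|\eta|=1$, and recursively $C_F(\eta)=\widehat F(\eta)-\sum_{\sigma\in\Pi(\eta),\,|\sigma|\geq 2}\prod_{b\in\sigma}C_F(b)$ for $|\eta|\geq 2$. *)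

(* Defs.v *)
From HB Require Import structures.
From mathcomp Require Import all_boot all_order all_algebra.
Set Implicit Arguments. Unset Strict Implicit. Unset Printing Implicit Defensive.
Import Order.TTheory GRing.Theory Num.Theory.
Local Open Scope ring_scope.

Section VirtualCumulants.
Variables (R : comNzRingType) (n r : nat).
Local Notation T := ('I_n * 'I_r)%type.

Definition cyl (eta : {set 'I_n}) : {set T} := setX eta [set: 'I_r].

Definition is_part (eta : {set 'I_n}) (rho : {set {set T}}) : bool :=
  partition rho (cyl eta).

Definition pi_eta (eta : {set 'I_n}) : {set {set T}} :=
  [set [set (k, j) | j : 'I_r] | k in eta].

(* join of two partitions P, Q of the same set: the finest common coarsening,
   i.e. the classes of the equivalence generated by "lie in a common block". *)
Definition pjoin (P Q : {set {set T}}) : {set {set T}} :=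
  equivalence_partition
    (connect (fun x y => [exists B in P :|: Q, (x \in B) && (y \in B)]))
    (cover P).

Definition one_hat (eta : {set 'I_n}) : {set {set T}} := [set cyl eta].

Definition restr (rho : {set {set T}}) (b : {set 'I_n}) : {set {set T}} :=
  [set c in rho | c \subset cyl b].

Definition mobius (F : {set {set T}} -> R) (eta : {set 'I_n}) : R :=
  if eta == set0 then 0 else \sum_(rho | is_part eta rho) F rho.

(* Virtual cumulant, by recursion on a fuel parameter; the actual cumulant
   uses fuel #|eta|, which suffices since blocks of a partition with >= 2
   blocks are strictly smaller. *)
Fixpoint vcum_fuel (F : {set {set T}} -> R) (k : nat) (eta : {set 'I_n}) : R :=
  match k with
  | 0 => 0
  | k'.+1 =>
      if #|eta| == 1%N then mobius F eta
      else mobius F eta -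
           \sum_(sigma : {set {set 'I_n}} | partition sigma eta && (2 <= #|sigma|)%N)
              \prod_(b in sigma) vcum_fuel F k' b
  end.

Definition vcum (F : {set {set T}} -> R) (eta : {set 'I_n}) : R :=
  vcum_fuel F #|eta| eta.

Definition conn_factorization (F : {set {set T}} -> R) : Prop :=
  forall (eta : {set 'I_n}) (rho : {set {set T}}),
    eta != set0 -> is_part eta rho ->
    F rho = \prod_(b : {set 'I_n} | (b \subset eta) &&
                                   (cyl b \in pjoin rho (pi_eta eta)))
              F (restr rho b).

End VirtualCumulants.

(* Main.v *)
Require Import Defs.
From HB Require Import structures.
From mathcomp Require Import all_boot all_order all_algebra.
Import Order.TTheory GRing.Theory Num.Theory.
Set Implicit Arguments. Unset Strict Implicit. Unset Printing Implicit Defensive.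

Lemma connect_restr (T : finType) (e e' : rel T) (S : pred T) :
  (forall u v, S u -> e u v -> S v && e' u v) ->
  forall x y, S x -> connect e x y -> connect e' x y.
Proof.
move=> H x y xS /connectP [p pp ->]; elim: p x xS pp => [|z p IH] x xS /=.
  by move=> _; exact: connect0.
case/andP => exz pz; case/andP: (H _ _ xS exz) => zS e'xz.
exact: connect_trans (connect1 e'xz) (IH _ zS pz).
Qed.

Lemma connect_stay (T : finType) (e : rel T) (S : pred T) :
  (forall u v, S u -> e u v -> S v) ->
  forall x y, S x -> connect e x y -> S y.
Proof.
move=> H x y xS /connectP [p pp ->]; elim: p x xS pp => [|z p IH] x xS //=.
case/andP => exz pz; exact: IH (H _ _ xS exz) pz.
Qed.

Section Aux.
Variables (n r : nat).
Hypothesis hr : (0 < r)%N.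
Local Notation T := ('I_n * 'I_r)%type.
Let j0 : 'I_r := Ordinal hr.

Lemma in_cyl (b : {set 'I_n}) (x : T) : (x \in cyl r b) = (x.1 \in b).
Proof. by case: x => k j; rewrite /cyl in_setX in_setT andbT. Qed.

Lemma in_pik (k : 'I_n) (x : T) : (x \in [set (k, j) | j : 'I_r]) = (x.1 == k).
Proof.
apply/imsetP/eqP => [[j _ ->]|<-] //; exists x.2 => //; by case: x.
Qed.

Lemma cyl_inj (b b' : {set 'I_n}) : cyl r b = cyl r b' -> b = b'.
Proof.
move=> H; apply/setP => k.
have : ((k, j0) \in cyl r b) = ((k, j0) \in cyl r b') by rewrite H.
by rewrite !in_cyl.
Qed.

Lemma cyl_sub (b b' : {set 'I_n}) : b \subset b' -> cyl r b \subset cyl r b'.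
Proof. by move/subsetP=> H; apply/subsetP => x; rewrite !in_cyl => /H. Qed.

Definition erel (P Q : {set {set T}}) : rel T :=
  fun x y => [exists B in P :|: Q, (x \in B) && (y \in B)].

Lemma erel_sym P Q : symmetric (erel P Q).
Proof.
move=> x y; apply/existsP/existsP => -[B /andP[H /andP[a b]]];
  by exists B; rewrite H a b.
Qed.

Lemma erel_csym P Q : connect_sym (erel P Q).
Proof. exact: sym_connect_sym (@erel_sym P Q). Qed.

Lemma pjoinE0 P Q : pjoin P Q = equivalence_partition (connect (erel P Q)) (cover P).
Proof. by []. Qed.

Lemma erel_in (eta : {set 'I_n}) rho u v : is_part eta rho ->
  erel rho (pi_eta r eta) u v -> (u \in cyl r eta) && (v \in cyl r eta).
Proof.
case/and3P => /eqP cov _ _.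
case/existsP=> B /andP[]; rewrite inE => /orP[BP|/imsetP[k keta ->]] /andP[uB vB].
  by rewrite -cov; apply/andP; split; apply/bigcupP; exists B.
by move: uB vB; rewrite !in_cyl !in_pik => /eqP-> /eqP->; rewrite keta.
Qed.

Lemma erel_pi (eta : {set 'I_n}) rho (u v : T) : u.1 \in eta -> u.1 = v.1 ->
  erel rho (pi_eta r eta) u v.
Proof.
move=> ue uv; apply/existsP; exists [set (u.1, j) | j : 'I_r].
rewrite in_pik eqxx in_pik uv eqxx !andbT inE; apply/orP; right.
by apply/imsetP; exists v.1; rewrite // -uv.
Qed.

Definition cls (eta : {set 'I_n}) rho (x : T) :=
  [set y in cyl r eta | connect (erel rho (pi_eta r eta)) x y].

Lemma pjoinE eta rho : is_part eta rho ->
  pjoin rho (pi_eta r eta) = [set cls eta rho x | x in cyl r eta].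
Proof. by case/and3P => /eqP cov _ _; rewrite /pjoin cov. Qed.

Lemma conn_in eta rho x y : is_part eta rho -> x \in cyl r eta ->
  connect (erel rho (pi_eta r eta)) x y -> y \in cyl r eta.
Proof.
move=> Hp; apply: (@connect_stay _ _ (mem (cyl r eta))) => u v _ H.
by case/andP: (erel_in Hp H).
Qed.

Lemma in_cls eta rho x y : is_part eta rho -> x \in cyl r eta ->
  (y \in cls eta rho x) = connect (erel rho (pi_eta r eta)) x y.
Proof.
move=> Hp xe; rewrite inE; case H: (connect _ x y); rewrite ?andbF ?andbT //.
exact: conn_in H.
Qed.

Lemma cls_cyl eta rho x : is_part eta rho -> x \in cyl r eta ->
  exists2 b : {set 'I_n}, b \subset eta & cls eta rho x = cyl r b.
Proof.
move=> Hp xe.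
exists [set k in eta | connect (erel rho (pi_eta r eta)) x (k, j0)].
  by apply/subsetP => k; rewrite inE => /andP[].
apply/setP => y; rewrite in_cls // in_cyl inE /=.
case ye: (y.1 \in eta) => /=.
  apply: (same_connect_r (@erel_csym _ _)).
  by apply: connect1; apply: erel_pi.
apply/negP => /(conn_in Hp xe); by rewrite in_cyl ye.
Qed.

Lemma pjoin_blocks eta rho C : is_part eta rho ->
  C \in pjoin rho (pi_eta r eta) -> exists2 x, x \in cyl r eta & C = cls eta rho x.
Proof. by move=> Hp; rewrite pjoinE // => /imsetP. Qed.

Lemma cls_eq eta rho x y : is_part eta rho -> x \in cyl r eta ->
  y \in cls eta rho x -> cls eta rho y = cls eta rho x.
Proof.
move=> Hp xe; rewrite in_cls // => xy.
apply/setP => z; rewrite !inE; congr (_ && _).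
by rewrite (same_connect (@erel_csym _ _) xy).
Qed.

Lemma pjoin_uniq (eta : {set 'I_n}) rho (b b' : {set 'I_n}) k : is_part eta rho ->
  cyl r b \in pjoin rho (pi_eta r eta) -> cyl r b' \in pjoin rho (pi_eta r eta) ->
  k \in b -> k \in b' -> b = b'.
Proof.
move=> Hp /(pjoin_blocks Hp) [x xe Hx] /(pjoin_blocks Hp) [x' xe' Hx'] kb kb'.
apply: cyl_inj; rewrite Hx Hx'.
have k1 : (k, j0) \in cls eta rho x by rewrite -Hx in_cyl.
have k2 : (k, j0) \in cls eta rho x' by rewrite -Hx' in_cyl.
by rewrite -(cls_eq Hp xe k1) -(cls_eq Hp xe' k2).
Qed.

Definition connp (b : {set 'I_n}) (s : {set {set T}}) :=
  is_part b s && (pjoin s (pi_eta r b) == one_hat r b).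

Lemma conn_all b s x y : connp b s -> x \in cyl r b -> y \in cyl r b ->
  connect (erel s (pi_eta r b)) x y.
Proof.
case/andP => Hp; rewrite pjoinE // /one_hat => /eqP H xb yb.
have : cls b s x \in [set cyl r b] by rewrite -H; apply/imsetP; exists x.
by move/set1P => E; rewrite -(in_cls _ Hp xb) E.
Qed.

Lemma all_conn b s x0 : is_part b s -> x0 \in cyl r b ->
  (forall y, y \in cyl r b -> connect (erel s (pi_eta r b)) x0 y) -> connp b s.
Proof.
move=> Hp x0b H; rewrite /connp Hp /=.
have full x : x \in cyl r b -> cls b s x = cyl r b.
  move=> xb; apply/setP => y; rewrite in_cls //.
  apply/idP/idP; first exact: conn_in.
  move=> yb; apply: connect_trans (H _ yb).
  by rewrite erel_csym; apply: H.
rewrite pjoinE // /one_hat; apply/eqP/setP => C; rewrite inE.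
apply/imsetP/eqP => [[x xb ->]|->]; first exact: full.
by exists x0 => //; rewrite full.
Qed.

Lemma K_fwd (eta : {set 'I_n}) rho (b : {set 'I_n}) : is_part eta rho -> b \subset eta ->
  cyl r b \in pjoin rho (pi_eta r eta) -> connp b (restr rho b).
Proof.
move=> Hp be /(pjoin_blocks Hp) [x0 x0e Hx0].
have x0b : x0 \in cyl r b by rewrite Hx0 in_cls // connect0.
have H1 u v : u \in cyl r b -> erel rho (pi_eta r eta) u v -> v \in cyl r b.
  rewrite Hx0 !in_cls // => xu uv; exact: connect_trans xu (connect1 uv).
have H2 B u : B \in rho -> u \in B -> u \in cyl r b -> B \subset cyl r b.
  move=> BP uB ub; apply/subsetP => v vB; apply: (H1 u) => //.
  by apply/existsP; exists B; rewrite !inE BP uB vB.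
case/and3P: (Hp) => /eqP cov triv s0.
have Hpb : is_part b (restr rho b).
  apply/and3P; split.
  - apply/eqP/setP => y; apply/bigcupP/idP => [[c]|yb].
      by rewrite inE => /andP[_ /subsetP]; apply.
    have ye : y \in cover rho by rewrite cov; move: yb; apply/subsetP/cyl_sub.
    exists (pblock rho y); last by rewrite mem_pblock.
    rewrite inE pblock_mem //=; apply: (H2 _ y) => //; first exact: pblock_mem.
    by rewrite mem_pblock.
  - by apply: trivIsetS triv; apply/subsetP => c; rewrite inE => /andP[].
  - by apply: contra s0; rewrite inE => /andP[].
apply: (all_conn Hpb x0b) => y yb.
have : connect (erel rho (pi_eta r eta)) x0 y by rewrite -in_cls // -Hx0.
apply: (@connect_restr _ _ _ (mem (cyl r b))) => // u v ub euv.
apply/andP; split; first exact: (H1 u v ub euv).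
case/existsP: euv => B /andP[]; rewrite inE => /orP[BP|/imsetP[k ke EB]] /andP[uB vB].
  apply/existsP; exists B; rewrite uB vB !inE BP /= andbT.
  by rewrite (H2 B u).
have ub' : u \in cyl r b := ub.
apply/existsP; exists B; rewrite uB vB !andbT in_setU; apply/orP; right; rewrite /pi_eta.
apply/imsetP; exists k => //.
by move: uB ub'; rewrite EB in_pik in_cyl => /eqP->.
Qed.

Lemma K_bwd (eta : {set 'I_n}) rho (b : {set 'I_n}) : is_part eta rho -> b != set0 -> b \subset eta ->
  connp b (restr rho b) -> cyl r b \in pjoin rho (pi_eta r eta).
Proof.
move=> Hp /set0Pn [k kb] be Hc.
have x0b : (k, j0) \in cyl r b by rewrite in_cyl.
have x0e : (k, j0) \in cyl r eta by move: x0b; apply/subsetP/cyl_sub.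
case/and3P: (Hp) => /eqP cov triv s0.
case/andP: (Hc) => Hpb _.
case/and3P: (Hpb) => /eqP covb trivb s0b.
rewrite pjoinE //; apply/imsetP; exists (k, j0) => //.
apply/setP => y; rewrite in_cls //; apply/idP/idP => [yb|].
  have := conn_all Hc x0b yb; apply: connect_sub => u v H; apply: connect1.
  case/existsP: H => B /andP[]; rewrite !inE => /orP[|] HB uvB;
    apply/existsP; exists B; rewrite !inE uvB andbT.
    by case/andP: HB => ->.
  by apply/orP; right; move: HB; apply/subsetP/imsetS.
apply: (@connect_stay _ _ (mem (cyl r b))) => // u v ub.
case/existsP => B /andP[]; rewrite inE => /orP[BP|/imsetP[k' ke EB]] /andP[uB vB].
  have uc : u \in cover (restr rho b) by rewrite covb.
  have Pm := pblock_mem uc.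
  have uP : u \in pblock (restr rho b) u by rewrite mem_pblock.
  move: (Pm); rewrite inE => /andP[PP /subsetP Psub].
  apply: Psub.
  by rewrite -(def_pblock triv PP uP) (def_pblock triv BP uB).
have ub' : u \in cyl r b := ub; suff : v \in cyl r b by []. 
by move: uB vB ub'; rewrite EB !in_pik !in_cyl => /eqP-> /eqP->.
Qed.

End Aux.

Section Main.
Variables (n r : nat).
Hypothesis hr : (0 < r)%N.
Local Notation T := ('I_n * 'I_r)%type.
Let j0 : 'I_r := Ordinal hr.

Definition tau (rho : {set {set T}}) (eta : {set 'I_n}) : {set {set 'I_n}} :=
  [set b : {set 'I_n} | (b \subset eta) && (cyl r b \in pjoin rho (pi_eta r eta))].

Lemma part_uniq (tau0 : {set {set 'I_n}}) eta b b' k : partition tau0 eta ->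
  b \in tau0 -> b' \in tau0 -> k \in b -> k \in b' -> b = b'.
Proof.
case/and3P => _ triv _ bt b't kb kb'.
by rewrite -(def_pblock triv bt kb) (def_pblock triv b't kb').
Qed.

Lemma part_sub (tau0 : {set {set 'I_n}}) eta b : partition tau0 eta ->
  b \in tau0 -> b \subset eta.
Proof.
case/and3P => /eqP <- _ _ bt; exact: bigcup_sup.
Qed.

Lemma tau_part eta rho : is_part eta rho -> partition (tau rho eta) eta.
Proof.
move=> Hp; apply/and3P; split.
- apply/eqP/setP => k; apply/bigcupP/idP => [[b]|ke].
    by rewrite inE => /andP[/subsetP H _]; apply: H.
  have xe : (k, j0) \in cyl r eta by rewrite in_cyl.
  have [b be Hb] := cls_cyl hr Hp xe.
  exists b.
    rewrite inE be /= pjoinE //; apply/imsetP; exists (k, j0) => //.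
  have : (k, j0) \in cls eta rho (k, j0) by rewrite in_cls // connect0.
  by rewrite Hb in_cyl.
- apply/trivIsetP => b b' bt b't neq.
  rewrite -setI_eq0; apply: contraR neq => /set0Pn [k]; rewrite inE => /andP[kb kb'].
  move: bt b't; rewrite !inE => /andP[_ H] /andP[_ H'].
  by apply/eqP; apply: (pjoin_uniq hr Hp H H' kb kb').
- rewrite inE; apply/negP => /andP[_ /(pjoin_blocks Hp) [x xe Hx]].
  have : x \in cls eta rho x by rewrite in_cls // connect0.
  by rewrite -Hx in_cyl inE.
Qed.

Lemma tau_cover eta rho c : is_part eta rho -> c \in rho ->
  exists2 b, b \in tau rho eta & c \subset cyl r b.
Proof.
move=> Hp cP; case/and3P: (Hp) => /eqP cov _ s0.
have : c != set0 by apply: contraNneq s0 => <-.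
case/set0Pn => x xc.
have xe : x \in cyl r eta by rewrite -cov; apply/bigcupP; exists c.
have [b be Hb] := cls_cyl hr Hp xe.
exists b.
  rewrite inE be /= pjoinE //; apply/imsetP; exists x => //.
apply/subsetP => z zc; rewrite -Hb in_cls //; apply: connect1.
apply/existsP; exists c; by rewrite inE cP xc zc.
Qed.

End Main.
Local Open Scope ring_scope.

Section Sum.
Variables (R : comNzRingType) (n r : nat).
Hypothesis hr : (0 < r)%N.
Local Notation T := ('I_n * 'I_r)%type.
Variable F : {set {set T}} -> R.
Hypothesis HF : conn_factorization F.

Definition Gc (b : {set 'I_n}) : R := \sum_(s | connp b s) F s.

Lemma sum_decomp (eta : {set 'I_n}) : eta != set0 ->
  \sum_(rho | is_part eta rho) F rho =
  \sum_(tau0 | partition tau0 eta) \prod_(b in tau0) Gc b.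
Proof.
move=> ne.
transitivity (\sum_(rho | is_part eta rho) \prod_(b in tau rho eta) F (restr rho b)).
  apply: eq_bigr => rho Hp; rewrite (HF ne Hp); apply: eq_bigl => b.
  by rewrite inE.
rewrite (partition_big (fun rho => tau rho eta) (fun t => partition t eta)) /=;
  last by move=> rho; exact: tau_part.
apply: eq_bigr => t Ht.
transitivity (\sum_(rho | is_part eta rho && (tau rho eta == t))
                \prod_(b in t) F (restr rho b)).
  by apply: eq_bigr => rho /andP[_ /eqP->].
rewrite /Gc (big_distr_big_dep set0) /=.
pose phi (rho : {set {set T}}) : {ffun {set 'I_n} -> {set {set T}}} :=
  [ffun b => if b \in t then restr rho b else set0].
pose A := [set rho : {set {set T}} | is_part eta rho && (tau rho eta == t)].
transitivity (\sum_(rho in A) \prod_(b in t) F (phi rho b)).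
  apply: eq_big => [rho|rho _]; first by rewrite inE.
  by apply: eq_bigr => b bt; rewrite ffunE bt.
have inj : {in A &, injective phi}.
  suff H rho rho' c : rho \in A -> rho' \in A -> phi rho = phi rho' ->
      c \in rho -> c \in rho'.
    move=> rho rho' HA HA' E; apply/setP => c; apply/idP/idP; first exact: H.
    exact: H HA' HA (esym E).
  rewrite !inE => /andP[Hp /eqP Ht1] /andP[Hp' /eqP Ht2] E cP.
  have [b bt csub] := tau_cover hr Hp cP.
  have : c \in phi rho b by rewrite ffunE -Ht1 bt inE cP csub.
  by rewrite E ffunE -Ht1 bt inE => /andP[].
rewrite -(big_imset (fun f : {ffun {set 'I_n} -> {set {set T}}} => \prod_(b in t) F (f b)) inj) /=.
apply: eq_bigl => f.
apply/imsetP/pfamilyP => [[rho HA ->]|[supp Hf]].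
  move: HA; rewrite inE => /andP[Hp /eqP Ht1]; split.
    apply/subsetP => b; rewrite inE ffunE; case: ifP => // _; by rewrite eqxx.
  move=> b bt; rewrite ffunE bt.
  move: bt; rewrite -Ht1 inE => /andP[be Hb].
  exact: (K_fwd Hp be Hb).
pose rho := \bigcup_(b in t) f b.
have hf b : b \in t -> connp b (f b) by move=> bt; exact: Hf.
have hp b : b \in t -> is_part b (f b) by move=> /hf /andP[].
have fsub b c : b \in t -> c \in f b -> c \subset cyl r b.
  move=> bt cf; case/and3P: (hp b bt) => /eqP <- _ _.
  exact: (bigcup_sup c cf).
have fne b c : b \in t -> c \in f b -> c != set0.
  move=> bt cf; case/and3P: (hp b bt) => _ _ s0.
  by apply: contraNneq s0 => <-.
have fsupp b : b \notin t -> f b = set0.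
  move=> bnt; apply/eqP; apply: contraNT bnt => H.
  by apply: (subsetP supp); rewrite inE H.
have restr_eq b : b \in t -> restr rho b = f b.
  move=> bt; apply/setP => c; rewrite inE; apply/andP/idP => [[/bigcupP[b' b't cf] csub]|cf].
    have /set0Pn[x xc] := fne b' c b't cf.
    have xb : x \in cyl r b by apply: (subsetP csub).
    have xb' : x \in cyl r b' by apply: (subsetP (fsub b' c b't cf)).
    rewrite in_cyl in xb; rewrite in_cyl in xb'.
    by rewrite (part_uniq Ht bt b't xb xb').
  split; first by apply/bigcupP; exists b.
  exact: fsub cf.
have Hp : is_part eta rho.
  apply/and3P; split.
  - apply/eqP/setP => x; apply/bigcupP/idP.
      case=> c /bigcupP[b bt cf] xc.
      have : x \in cyl r b by apply: (subsetP (fsub b c bt cf)).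
      by apply/subsetP/cyl_sub/(part_sub Ht bt).
    move=> xe; rewrite in_cyl in xe.
    case/and3P: (Ht) => /eqP cov _ _.
    move: xe; rewrite -cov => /bigcupP[b bt xb].
    have : x \in cover (f b) by case/and3P: (hp b bt) => /eqP-> _ _; rewrite in_cyl.
    case/bigcupP => c cf xc; exists c => //; by apply/bigcupP; exists b.
  - apply/trivIsetP => c c' /bigcupP[b bt cf] /bigcupP[b' b't c'f] neq.
    case: (eqVneq b b') => [Eb|nb].
      subst b'; case/and3P: (hp b bt) => _ tr _; exact: (trivIsetP tr).
    rewrite -setI_eq0; apply/eqP/setP => x; rewrite !inE; apply/negP => /andP[xc xc'].
    have xb : x \in cyl r b by apply: (subsetP (fsub b c bt cf)).
    have xb' : x \in cyl r b' by apply: (subsetP (fsub b' c' b't c'f)).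
    rewrite in_cyl in xb; rewrite in_cyl in xb'.
    by move: nb; rewrite (part_uniq Ht bt b't xb xb') eqxx.
  - apply/negP => /bigcupP[b bt s0f]; have := fne b set0 bt s0f; by rewrite eqxx.
have dir2 b : b \in t -> b \in tau rho eta.
  move=> bt; rewrite inE (part_sub Ht bt) /=.
  apply: (K_bwd hr Hp _ (part_sub Ht bt)); last by rewrite restr_eq //; exact: hf.
  by case/and3P: (Ht) => _ _ s0; apply: contraNneq s0 => <-.
exists rho.
  rewrite inE Hp /=; apply/eqP/setP => b; apply/idP/idP; last exact: dir2.
  rewrite inE => /andP[be Hb].
  have [x xe Hx] := pjoin_blocks Hp Hb.
  have : x \in cls eta rho x by rewrite in_cls // connect0.
  rewrite -Hx in_cyl => xb.
  rewrite in_cyl in xe.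
  case/and3P: (Ht) => /eqP cov _ _.
  move: xe; rewrite -cov => /bigcupP[b' b't xb'].
  have := dir2 b' b't; rewrite inE => /andP[_ Hb'].
  by rewrite (pjoin_uniq hr Hp Hb Hb' xb xb').
apply/ffunP => b; rewrite ffunE; case: ifP => bt; first by rewrite restr_eq.
by apply: fsupp; rewrite bt.
Qed.
End Sum.
Local Open Scope ring_scope.

Lemma part_set1 (T : finType) (eta : {set T}) : eta != set0 -> partition [set eta] eta.
Proof. by move=> ne; rewrite /partition cover1 eqxx trivIset1 inE eq_sym ne. Qed.

Lemma part_small (T : finType) (t : {set {set T}}) (eta : {set T}) :
  partition t eta -> eta != set0 -> (t != [set eta]) = (2 <= #|t|)%N.
Proof.
move=> Ht ne; case/and3P: (Ht) => /eqP cov _ _.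
apply/idP/idP => [neq|H2]; last first.
  by apply: contraTneq H2 => ->; rewrite cards1.
rewrite ltnNge leq_eqVlt ltnS leqn0 cards_eq0; apply/negP => /orP[/cards1P [B EB]|/eqP E].
  by move: neq; rewrite EB -cov EB cover1 eqxx.
by move: ne; rewrite -cov E /cover big_set0 eqxx.
Qed.

Lemma part_lt (T : finType) (t : {set {set T}}) (eta b : {set T}) :
  partition t eta -> (2 <= #|t|)%N -> b \in t -> (0 < #|b| < #|eta|)%N.
Proof.
move=> Ht H2 bt; case/and3P: (Ht) => /eqP cov triv s0.
have bne : b != set0 by apply: contraNneq s0 => <-.
rewrite card_gt0 bne /=; apply: proper_card.
have bsub : b \subset eta by rewrite -cov; exact: bigcup_sup.
rewrite properEneq bsub andbT.
have : (0 < #|t :\ b|)%N by move: H2; rewrite (cardsD1 b t) bt.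
rewrite card_gt0 => /set0Pn [b'] /setD1P [nb b't].
apply: contra nb => /eqP Eb.
have b'ne : b' != set0 by apply: contraNneq s0 => <-.
case/set0Pn: b'ne => x xb'.
have xb : x \in b by rewrite Eb -cov; apply/bigcupP; exists b'.
by rewrite -(def_pblock triv bt xb) (def_pblock triv b't xb').
Qed.

Theorem proposition3p3 (R : realFieldType) (n r : nat)
  (hn : (1 <= n)%N) (hr : (1 <= r)%N)
  (F : {set {set ('I_n * 'I_r)}} -> R) :
  conn_factorization F ->
  forall eta : {set 'I_n}, eta != set0 ->
    vcum F eta =
    \sum_(sigma : {set {set ('I_n * 'I_r)}} |
            is_part eta sigma && (pjoin sigma (pi_eta r eta) == one_hat r eta))
       F sigma.
Proof.
move=> HF.
suff key k (eta : {set 'I_n}) : eta != set0 -> (#|eta| <= k)%N ->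
    vcum_fuel F k eta = Gc F eta.
  by move=> eta ne; apply: key.
elim: k eta => [|k IH] eta ne le.
  by move: le; rewrite leqn0 cards_eq0 (negbTE ne).
have mob : mobius F eta = Gc F eta +
    \sum_(t : {set {set 'I_n}} | partition t eta && (2 <= #|t|)%N) \prod_(b in t) Gc F b.
  rewrite /mobius (negbTE ne) (sum_decomp hr HF ne) (bigD1 [set eta]) /=;
    last exact: part_set1.
  rewrite big_set1; congr (_ + _); apply: eq_bigl => t.
  case Ht: (partition t eta) => //=; exact: part_small.
rewrite /=; case: ifP => h1.
  rewrite mob big_pred0 ?addr0 // => t; apply/negP => /andP[Ht H2].
  have : t != set0 by rewrite -card_gt0; apply: leq_trans H2.
  case/set0Pn => b bt; have := part_lt Ht H2 bt.
  by rewrite (eqP h1) ltnS leqn0 => /andP[/lt0n_neq0/negbTE->].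
rewrite mob.
have -> : \sum_(sigma : {set {set 'I_n}} | partition sigma eta && (1 < #|sigma|)%N)
     \prod_(b in sigma) vcum_fuel F k b =
  \sum_(t : {set {set 'I_n}} | partition t eta && (1 < #|t|)%N) \prod_(b in t) Gc F b;
  last by rewrite addrK.
apply: eq_bigr => t /andP[Ht H2]; apply: eq_bigr => b bt.
have /andP[b0 blt] := part_lt Ht H2 bt.
apply: IH; first by rewrite -card_gt0.
by rewrite -ltnS; apply: leq_trans blt le.
Qed.
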